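(* In the Group Lasso setting (linear model $\mathbf y=\mathbf X\boldsymbol\beta+\boldsymbol\epsilon$, groups of sizes $n_1,\dots,n_G$, fixed weights $w_g>0$, $\widehat{\boldsymbol\beta}=\widehat{\boldsymbol\beta}(\gamma)=\arg\min_{\boldsymbol\beta}\tfrac12\|\mathbf y-\mathbf X\boldsymbol\beta\|_2^2+\gamma\sum_g w_g\|\boldsymbol\beta_g\|_2$ for fixed $\mathbf y$), let $$\widehat{df}_\gamma=\mathrm{trace}\big[(\mathbf I_n+\gamma\mathbf B)^{-1}\mathbf A\big],\quad \mathbf A=\mathbf X_{\mathcal A_G}(\mathbf X_{\mathcal A_G}^\top\mathbf X_{\mathcal A_G})^{-1}\mathbf X_{\mathcal A_G}^\top,\ \mathbf B=\mathbf X_{\mathcal A_G}(\mathbf X_{\mathcal A_G}^\top\mathbf X_{\mathcal A_G})^{-1}\boldsymbol\Pi_{\mathcal A_G}(\mathbf X_{\mathcal A_G}^\top\mathbf X_{\mathcal A_G})^{-1}\mathbf X_{\mathcal A_G}^\top$$ (which for $\mathbf X^\top\mathbf X=\mathbf I_p$ reduce to $\mathbf A=\mathbf X_{\mathcal A_G}\mathbf X_{\mathcal A_G}^\top$, $\mathbf B=\mathbf X_{\mathcal A_G}\boldsymbol\Pi_{\mathcal A_G}\mathbf X_{\mathcal A_G}^\top$). If the matrix $\boldsymbol\Pi_{\mathcal A_G}+\gamma\,\mathrm d\boldsymbol\Pi_{\mathcal A_G}/\mathrm d\gamma$ is positive definite, then $\widehat{df}_\gamma$ is a non-increasing function of $\gamma$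 for $\gamma\in(\gamma_l,\gamma_{l+1})$.
   Context: $\boldsymbol\beta_g\in\mathbb R^{n_g}$ is the subvector for group $g$. $\mathcal A_G=\{g:\|\widehat{\boldsymbol\beta}_g\|_2\neq0\}$ is the set of active groups, $\mathbf X_{\mathcal A_G}$ the columns of $\mathbf X$ for active groups (in group order), with $\mathbf X_{\mathcal A_G}^\top\mathbf X_{\mathcal A_G}$ invertible, and $\boldsymbol\Pi_{\mathcal A_G}=\mathrm{blockdiag}_{g\in\mathcal A_G}\big(w_g[\mathbf I_{n_g}/\|\widehat{\boldsymbol\beta}_g\|_2-\widehat{\boldsymbol\beta}_g\widehat{\boldsymbol\beta}_g^\top/\|\widehat{\boldsymbol\beta}_g\|_2^3]\big)$, regarded as a function of $\gamma$ through $\widehat{\boldsymbol\beta}(\gamma)$; $\mathrm d\boldsymbol\Pi_{\mathcal A_G}/\mathrm d\gamma$ is its derivative along the solution path. Transition points $\gamma_1<\dots<\gamma_L$ are the values of $\gamma>0$ where the active set changes; on each interval $(\gamma_l,\gamma_{l+1})$ the active set is constant. *)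

(* Defs.v *)
From HB Require Import structures.
From mathcomp Require Import all_boot all_order all_algebra.
From mathcomp Require Import all_classical all_reals all_analysis.
Set Implicit Arguments. Unset Strict Implicit. Unset Printing Implicit Defensive.
Import Order.TTheory GRing.Theory Num.Theory.
Local Open Scope ring_scope.

Section GroupLasso.
Variables (R : realType) (n p G : nat).

(* Group membership of the p coordinates: coordinate j belongs to group grp j.
   beta_g is the subvector (beta_j)_{grp j = g}. *)

Definition gnorm (grp : 'I_p -> 'I_G) (b : 'cV[R]_p) (g : 'I_G) : R :=
  Num.sqrt (\sum_(j < p | grp j == g) b j 0 ^+ 2).

(* coordinates belonging to active groups  (union of the groups in A_G) *)
Definition active (grp : 'I_p -> 'I_G) (b : 'cV[R]_p) : {set 'I_p} :=
  [set j | gnorm grp b (grp j) != 0].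

Definition glasso_obj (X : 'M[R]_(n, p)) (y : 'cV[R]_n) (grp : 'I_p -> 'I_G)
    (w : 'I_G -> R) (gam : R) (b : 'cV[R]_p) : R :=
  2^-1 * (\sum_(i < n) ((y - X *m b) i 0) ^+ 2)
  + gam * (\sum_(g < G) w g * gnorm grp b g).

(* block-diagonal matrix  blockdiag_g ( w_g [ I/||b_g|| - b_g b_g^T/||b_g||^3 ] ),
   written on all p coordinates (entries between different groups are 0) *)
Definition PiFull (grp : 'I_p -> 'I_G) (w : 'I_G -> R) (b : 'cV[R]_p) : 'M[R]_p :=
  \matrix_(i, j) (if grp i == grp j then
      w (grp i) * ((i == j)%:R / gnorm grp b (grp i)
                   - b i 0 * b j 0 / gnorm grp b (grp i) ^+ 3)
    else 0).

Definition restr (S : {set 'I_p}) (M : 'M[R]_p) : 'M[R]_#|S| :=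
  \matrix_(i, j) M (enum_val i) (enum_val j).

Definition Xsub (S : {set 'I_p}) (X : 'M[R]_(n, p)) : 'M[R]_(n, #|S|) :=
  \matrix_(i, k) X i (enum_val k).

Definition dPi (grp : 'I_p -> 'I_G) (w : 'I_G -> R) (bhat : R -> 'cV[R]_p)
    (gam : R) : 'M[R]_p :=
  \matrix_(i, j) derive1 (fun t => PiFull grp w (bhat t) i j) gam.

Definition dfhat (X : 'M[R]_(n, p)) (grp : 'I_p -> 'I_G) (w : 'I_G -> R)
    (gam : R) (b : 'cV[R]_p) : R :=
  let S := active grp b in
  let XA := Xsub S X in
  let Ginv := invmx (XA^T *m XA) in
  let A := XA *m Ginv *m XA^T in
  let B := XA *m Ginv *m restr S (PiFull grp w b) *m Ginv *m XA^T in
  \tr (invmx (1%:M + gam *: B) *m A).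

End GroupLasso.

Definition posdef (R : realType) (m : nat) (M : 'M[R]_m) : Prop :=
  M^T = M /\ forall v : 'cV[R]_m, v != 0 -> 0 < (v^T *m M *m v) 0 0.

(* Main.v *)
Require Import Defs.
From HB Require Import structures.
From mathcomp Require Import all_boot all_order all_algebra.
From mathcomp Require Import all_classical all_reals all_analysis.
Import Order.TTheory GRing.Theory Num.Theory.
Local Open Scope ring_scope.
From mathcomp Require Import ring lra.
Require Import Defs.
Set Implicit Arguments. Unset Strict Implicit.
Section A.
Variable R : realType.

Lemma CS (I : finType) (P : pred I) (x y : I -> R) :
  (\sum_(i | P i) x i * y i) ^+ 2 <= (\sum_(i | P i) x i ^+ 2) * (\sum_(i | P i) y i ^+ 2).
Proof.
have H : 0 <= \sum_(i | P i) \sum_(j | P j) (x i * y j - x j * y i) ^+ 2.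
  by apply: sumr_ge0 => i _; apply: sumr_ge0 => j _; apply: sqr_ge0.
have E : \sum_(i | P i) \sum_(j | P j) (x i * y j - x j * y i) ^+ 2 =
   2 * ((\sum_(i | P i) x i ^+ 2) * (\sum_(i | P i) y i ^+ 2) - (\sum_(i | P i) x i * y i) ^+ 2).
  have E1 : forall i j, (x i * y j - x j * y i) ^+ 2 =
     x i ^+ 2 * y j ^+ 2 + x j ^+ 2 * y i ^+ 2 - 2 * ((x i * y i) * (x j * y j)).
    by move=> i j; ring.
  set X := \sum_(i | P i) x i ^+ 2. set Y := \sum_(i | P i) y i ^+ 2.
  set T := \sum_(i | P i) x i * y i.
  have inner : forall i, \sum_(j | P j) (x i * y j - x j * y i) ^+ 2 =
      x i ^+ 2 * Y + X * y i ^+ 2 - 2 * (x i * y i) * T.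
    move=> i; under eq_bigr do rewrite E1.
    rewrite big_split big_split /= sumrN /X /Y /T mulr_sumr mulr_suml mulr_sumr.
    by congr (_ + _ - _); apply: eq_bigr => j _; ring.
  under eq_bigr do rewrite inner.
  rewrite big_split big_split /= sumrN -mulr_suml -mulr_sumr -mulr_suml -/X -/Y -/T.
  rewrite -mulr_sumr -/T; ring.
rewrite E in H. nra.
Qed.

Lemma qfE m (P : 'M[R]_m) (u : 'rV[R]_m) :
  (u *m P *m u^T) 0 0 = \sum_i \sum_j u 0 i * P i j * u 0 j.
Proof.
rewrite mxE. under eq_bigr do rewrite mxE big_distrl /=.
rewrite exchange_big /=; apply: eq_bigr => i _; apply: eq_bigr => j _.
by rewrite !mxE.
Qed.

Lemma PiFull_psd p G (grp : 'I_p -> 'I_G) (w : 'I_G -> R) (b : 'cV[R]_p) (u : 'rV[R]_p) :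
  (forall g, 0 <= w g) -> 0 <= (u *m PiFull grp w b *m u^T) 0 0.
Proof.
move=> w0; rewrite qfE (partition_big grp xpredT) //=.
apply: sumr_ge0 => g _.
set r := gnorm grp b g.
set T := \sum_(j | grp j == g) u 0 j * b j 0.
have inner : forall i, grp i == g -> \sum_j u 0 i * PiFull grp w b i j * u 0 j =
   w g * (u 0 i ^+ 2 / r) - w g * (u 0 i * b i 0) * T / r ^+ 3.
  move=> i /eqP gi.
  under eq_bigr => j _ do rewrite mxE gi eq_sym (fun_if (fun x => u 0 i * x * u 0 j)) mulr0 mul0r.
  rewrite -big_mkcond /=.
  have E : forall j, u 0 i * (w g * ((i == j)%:R / r - b i 0 * b j 0 / r ^+ 3)) * u 0 j
     = w g * ((i == j)%:R * (u 0 i * u 0 j) / r) - w g * (u 0 i * b i 0) * (u 0 j * b j 0) / r ^+ 3.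
    by move=> j; rewrite !mulrA; ring.
  under eq_bigr do rewrite E.
  rewrite sumrB; congr (_ - _).
    rewrite (bigD1 i) /=; last by rewrite gi.
    rewrite big1 ?addr0; first by rewrite eqxx mul1r expr2.
    by move=> j /andP[_ /negbTE ji]; rewrite eq_sym ji mul0r mul0r mulr0.
  rewrite /T big_distrr /= big_distrl /=; apply: eq_bigr => j _; ring.
rewrite (eq_bigr _ (fun i => inner i)).
rewrite sumrB.
set Su := \sum_(i | grp i == g) u 0 i ^+ 2.
rewrite -big_distrr /= -mulr_suml -/Su.
rewrite -big_distrl /= -big_distrl /= -big_distrr /= -/T.
have [r0|rn0] := eqVneq r 0.
  by rewrite r0 expr0n /= invr0 !mulr0 subr0.
have rpos : 0 < r by rewrite lt_def rn0 sqrtr_ge0.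
have r2 : r ^+ 2 = \sum_(j | grp j == g) b j 0 ^+ 2.
  by rewrite /r /gnorm sqr_sqrtr // sumr_ge0 // => j _; apply: sqr_ge0.
have cs := @CS _ (fun j => grp j == g) (fun j => u 0 j) (fun j => b j 0).
rewrite -r2 -/Su -/T in cs.
have -> : w g * (Su / r) - w g * T * T / r ^+ 3 = w g * (Su * r ^+ 2 - T ^+ 2) / r ^+ 3.
  by field; exact: rn0.
apply: mulr_ge0; last by rewrite invr_ge0; apply: exprn_ge0; apply: ltW.
apply: mulr_ge0; first exact: w0.
by rewrite subr_ge0.
Qed.

Lemma restrT p (S : {set 'I_p}) (P : 'M[R]_p) : (restr S P)^T = restr S P^T.
Proof. by apply/matrixP => i j; rewrite !mxE. Qed.

Lemma PiFullT p G (grp : 'I_p -> 'I_G) (w : 'I_G -> R) (b : 'cV[R]_p) :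
  (PiFull grp w b)^T = PiFull grp w b.
Proof.
apply/matrixP => i j; rewrite !mxE eq_sym.
case: eqP => // gij; rewrite gij (eq_sym j i); congr (_ * (_ - _)); ring.
Qed.

Definition Emx {p} (S : {set 'I_p}) : 'M[R]_(p, #|S|) := \matrix_(j, l) (j == enum_val l)%:R.

Lemma restrE p (S : {set 'I_p}) (P : 'M[R]_p) : restr S P = (Emx S)^T *m P *m Emx S.
Proof.
apply/matrixP => i j; rewrite !mxE.
rewrite (bigD1 (enum_val j)) //= big1 ?addr0.
  rewrite !mxE eqxx mulr1 (bigD1 (enum_val i)) //= big1 ?addr0.
    by rewrite !mxE eqxx mul1r.
  by move=> a /negbTE ai; rewrite !mxE ai mul0r.
by move=> c /negbTE cj; rewrite !mxE cj mulr0.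
Qed.

Lemma restr_psd p (S : {set 'I_p}) (P : 'M[R]_p) :
  (forall u : 'rV[R]_p, 0 <= (u *m P *m u^T) 0 0) ->
  forall u : 'rV[R]_#|S|, 0 <= (u *m restr S P *m u^T) 0 0.
Proof.
move=> H u; rewrite restrE.
have := H (u *m (Emx S)^T).
by rewrite trmx_mul trmxK !mulmxA.
Qed.

Lemma sqnormE m (z : 'rV[R]_m) : (z *m z^T) 0 0 = \sum_i z 0 i ^+ 2.
Proof. by rewrite mxE; apply: eq_bigr => i _; rewrite mxE expr2. Qed.

Lemma sqnorm_ge0 m (z : 'rV[R]_m) : 0 <= (z *m z^T) 0 0.
Proof. by rewrite sqnormE sumr_ge0 // => i _; apply: sqr_ge0. Qed.

Lemma sqnorm_eq0 m (z : 'rV[R]_m) : (z *m z^T) 0 0 = 0 -> z = 0.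
Proof.
rewrite sqnormE => /eqP; rewrite psumr_eq0; last by move=> i _; apply: sqr_ge0.
move=> /allP H; apply/matrixP => i j; rewrite (ord1 i) mxE.
by have := H j (mem_index_enum j); rewrite /= sqrf_eq0 => /eqP.
Qed.

Lemma N_unit n k (XA : 'M[R]_(n, k)) (Q : 'M[R]_k) (t : R) :
  XA^T *m XA \in unitmx -> 0 <= t ->
  (forall u : 'rV[R]_k, 0 <= (u *m Q *m u^T) 0 0) ->
  XA^T *m XA + t *: Q \in unitmx.
Proof.
move=> Mu t0 Qpsd.
rewrite unitmxE unitfE; apply/negP => /det0P [v v0 hv].
have E : (v *m (XA^T *m XA + t *: Q) *m v^T) 0 0 =
   ((v *m XA^T) *m (v *m XA^T)^T) 0 0 + t * (v *m Q *m v^T) 0 0.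
  rewrite mulmxDr mulmxDl -scalemxAr -scalemxAl trmx_mul trmxK !mulmxA.
  rewrite [LHS]mxE; congr (_ + _); by rewrite mxE.
rewrite hv mul0mx mxE in E.
have h1 := sqnorm_ge0 (v *m XA^T).
have h2 := Qpsd v.
have h3 : ((v *m XA^T) *m (v *m XA^T)^T) 0 0 = 0.
  apply/eqP; rewrite eq_le h1 andbT.
  have hB : 0 <= t * (v *m Q *m v^T) 0 0 by apply: mulr_ge0.
  lra.
have h4 := sqnorm_eq0 h3.
have : v *m (XA^T *m XA) = 0 by rewrite mulmxA h4 mul0mx.
move=> /(congr1 (mulmx^~ (invmx (XA^T *m XA)))); rewrite mulmxK // mul0mx.
by move=> vz; move: v0; rewrite vz eqxx.
Qed.

Lemma IB_unit n k (XA : 'M[R]_(n, k)) (Q : 'M[R]_k) (t : R) :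
  let M := XA^T *m XA in let G := invmx M in
  M \in unitmx -> M + t *: Q \in unitmx ->
  1%:M + t *: (XA *m G *m Q *m G *m XA^T) \in unitmx.
Proof.
move=> M G Mu Nu.
rewrite unitmxE unitfE; apply/negP => /det0P [u u0 hu].
set z := u *m XA *m G.
have hu' : u = - t *: (z *m Q *m G *m XA^T).
  move: hu; rewrite mulmxDr mulmx1 => /eqP; rewrite addr_eq0 => /eqP ->.
  by rewrite -scalemxAr scaleNr /z !mulmxA.
have hz : z *m (M + t *: Q) = 0.
  have e1 : z *m M = u *m XA by rewrite /z -mulmxA mulVmx // mulmx1.
  have e2 : u *m XA = - t *: (z *m Q) .
    rewrite {1}hu' -scalemxAl -!mulmxA.
    by rewrite [G *m (XA^T *m XA)]mulVmx // mulmx1.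
  by rewrite mulmxDr e1 e2 -scalemxAr scaleNr addNr.
have z0 : z = 0.
  by move: hz => /(congr1 (mulmx^~ (invmx (M + t *: Q)))); rewrite mulmxK // mul0mx.
by move: u0; rewrite hu' z0 !mul0mx scaler0 eqxx.
Qed.

Lemma df_alg n k (XA : 'M[R]_(n, k)) (Q : 'M[R]_k) (t : R) :
  let M := XA^T *m XA in let G := invmx M in
  M \in unitmx -> M + t *: Q \in unitmx ->
  \tr (invmx (1%:M + t *: (XA *m G *m Q *m G *m XA^T)) *m (XA *m G *m XA^T))
  = \tr (invmx (M + t *: Q) *m M).
Proof.
move=> M G Mu Nu.
have IBu := IB_unit Mu Nu.
set IB := 1%:M + _.
set Ni := invmx (M + t *: Q).
have c1 : IB *m (XA *m Ni *m M) = XA.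
  have : IB *m XA = XA *m G *m (M + t *: Q).
    rewrite /IB mulmxDl mul1mx -scalemxAl -!mulmxA.
    rewrite [G *m (XA^T *m XA)]mulVmx // mulmx1.
    by rewrite mulmxDr mulVmx // -scalemxAr mulmxDr mulmx1 -scalemxAr.
  rewrite !mulmxA => ->.
  rewrite -[XA *m G *m (M + t *: Q) *m Ni]mulmxA mulmxV // mulmx1.
  by rewrite -mulmxA -mulmxA mulVmx // mulmx1.
have c2 : invmx IB *m XA = XA *m Ni *m M.
  by rewrite -[X in _ *m X = _]c1 mulKmx.
rewrite !mulmxA c2.
rewrite -[XA *m Ni *m M *m G]mulmxA mulmxV // mulmx1.
by rewrite -(mulmxA XA Ni XA^T) (mxtrace_mulC XA).
Qed.
End A.
Section B.
Variable R : realType.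
Implicit Types (f g : R -> R) (x : R).

Lemma dcst (c : R) x : derivable (fun _ : R => c) x 1.
Proof. exact: derivable_cst. Qed.
Lemma dadd f g x : derivable f x 1 -> derivable g x 1 -> derivable (fun t => f t + g t) x 1.
Proof. move=> df dg. exact: (derivableD df dg). Qed.
Lemma dopp f x : derivable f x 1 -> derivable (fun t => - f t) x 1.
Proof. move=> df. exact: (derivableN df). Qed.
Lemma dsub f g x : derivable f x 1 -> derivable g x 1 -> derivable (fun t => f t - g t) x 1.
Proof. by move=> df dg; apply: dadd => //; apply: dopp. Qed.
Lemma dmul f g x : derivable f x 1 -> derivable g x 1 -> derivable (fun t => f t * g t) x 1.
Proof. move=> df dg. exact: (derivableM df dg). Qed.
Lemma dinv f x : f x != 0 -> derivable f x 1 -> derivable (fun t => (f t)^-1) x 1.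
Proof. move=> fx df. exact: (derivableV fx df). Qed.
Lemma dexp f x n : derivable f x 1 -> derivable (fun t => f t ^+ n) x 1.
Proof. move=> df; elim: n => [|n IH]; first exact: dcst.
by under eq_fun do rewrite exprS; apply: dmul. Qed.
Lemma dsqrt f x : 0 < f x -> derivable f x 1 -> derivable (fun t => Num.sqrt (f t)) x 1.
Proof.
move=> fx df; apply/derivable1_diffP.
have -> : (fun t => Num.sqrt (f t)) = Num.sqrt \o f by [].
apply: differentiable_comp; first exact/derivable1_diffP.
apply/derivable1_diffP.
by have [] := is_derive1_sqrt fx.
Qed.

Lemma dsum (I : Type) (r : seq I) (P : pred I) (F : I -> R -> R) x :
 (forall i, P i -> derivable (F i) x 1) -> derivable (fun t => \sum_(i <- r | P i) F i t) x 1.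
Proof.
elim: r => [|i r IH] H.
  under eq_fun do rewrite big_nil. exact: derivable_cst.
under eq_fun do rewrite big_cons.
case Pi: (P i); last exact: IH.
by apply: dadd; [exact: H | exact: IH].
Qed.
Lemma dprod (I : Type) (r : seq I) (P : pred I) (F : I -> R -> R) x :
 (forall i, P i -> derivable (F i) x 1) -> derivable (fun t => \prod_(i <- r | P i) F i t) x 1.
Proof.
elim: r => [|i r IH] H.
  under eq_fun do rewrite big_nil. exact: derivable_cst.
under eq_fun do rewrite big_cons.
case Pi: (P i); last exact: IH.
by apply: dmul; [exact: H | exact: IH].
Qed.
Lemma ddet m (A : R -> 'M[R]_m) x : (forall i j, derivable (fun t => A t i j) x 1) ->
  derivable (fun t => \det (A t)) x 1.
Proof.
move=> H. rewrite /determinant. apply: dsum => s _.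
apply: dmul; first exact: derivable_cst.
by apply: dprod => i _.
Qed.
Lemma dadj m (A : R -> 'M[R]_m) x : (forall i j, derivable (fun t => A t i j) x 1) ->
  forall i j, derivable (fun t => \adj (A t) i j) x 1.
Proof.
move=> H i j; under eq_fun do rewrite mxE /cofactor.
apply: dmul; first exact: dcst.
apply: (ddet (A := fun t => row' j (col' i (A t)))) => k l.
by under eq_fun do rewrite !mxE; exact: H.
Qed.

Lemma Dadd f g x : derivable f x 1 -> derivable g x 1 ->
  'D_1 (fun t => f t + g t) x = 'D_1 f x + 'D_1 g x.
Proof. move=> df dg. exact: (deriveD df dg). Qed.
Lemma Dmul f g x : derivable f x 1 -> derivable g x 1 ->
  'D_1 (fun t => f t * g t) x = f x * 'D_1 g x + g x * 'D_1 f x.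
Proof. move=> df dg. exact: (deriveM df dg). Qed.
Lemma Dcst (c : R) x : 'D_1 (fun _ : R => c) x = 0.
Proof. exact: derive_cst. Qed.
Lemma Did x : 'D_1 (fun t : R => t) x = 1.
Proof. exact: derive_id. Qed.
Lemma Dsum (I : Type) (r : seq I) (P : pred I) (F : I -> R -> R) x :
 (forall i, P i -> derivable (F i) x 1) ->
 'D_1 (fun t => \sum_(i <- r | P i) F i t) x = \sum_(i <- r | P i) 'D_1 (F i) x.
Proof.
elim: r => [|i r IH] H.
  under eq_fun do rewrite big_nil. by rewrite big_nil Dcst.
under eq_fun do rewrite big_cons. rewrite big_cons.
case Pi: (P i); last exact: IH.
rewrite Dadd ?IH //; first exact: H.
by apply: dsum.
Qed.
End B.
Section C.
Variables (R : realType) (n p G : nat) (X : 'M[R]_(n, p)) (grp : 'I_p -> 'I_G)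
  (w : 'I_G -> R) (bhat : R -> 'cV[R]_p) (a b : R) (S : {set 'I_p}).
Hypotheses (w0 : forall g, 0 < w g) (a0 : 0 <= a)
  (hS : forall gam, a < gam < b -> active grp (bhat gam) = S)
  (Mu : (Xsub S X)^T *m Xsub S X \in unitmx)
  (hd : forall gam, a < gam < b -> forall j, derivable (fun t => bhat t j 0) gam 1)
  (hpd : forall gam, a < gam < b ->
      posdef (restr S (PiFull grp w (bhat gam) + gam *: dPi grp w bhat gam))).

Local Notation XA := (Xsub S X).
Local Notation M := (XA^T *m XA).
Local Notation Pi t := (restr S (PiFull grp w (bhat t))).
Local Notation N t := (M + t *: Pi t).
Local Notation Ninv t := ((\det (N t))^-1 *: \adj (N t)).

Lemma Pi_psd t : forall u : 'rV[R]_#|S|, 0 <= (u *m Pi t *m u^T) 0 0.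
Proof. by apply: restr_psd => u; apply: PiFull_psd => g; apply: ltW. Qed.

Lemma NU t : a < t < b -> N t \in unitmx.
Proof.
move=> /andP[ha hb]; apply: N_unit => //; last exact: Pi_psd.
by apply: ltW; exact: le_lt_trans ha.
Qed.

Lemma Ninv_inv t : a < t < b -> invmx (N t) = Ninv t.
Proof. by move=> ht; rewrite /invmx NU. Qed.

Lemma dfhat_F t : a < t < b -> dfhat X grp w t (bhat t) = \tr (Ninv t *m M).
Proof.
move=> ht; rewrite /dfhat hS //.
by rewrite df_alg // ?Ninv_inv //; apply: NU.
Qed.

Lemma dPi_entry s (i j : 'I_#|S|) : a < s < b ->
  derivable (fun t => PiFull grp w (bhat t) (enum_val i) (enum_val j)) s 1.
Proof.
move=> hs.
have iS : enum_val i \in active grp (bhat s) by rewrite (hS hs); exact: enum_valP.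
rewrite inE in iS.
under eq_fun do rewrite mxE.
case: (grp (enum_val i) == grp (enum_val j)); last exact: dcst.
set g := grp (enum_val i).
have dsq : derivable (fun t => \sum_(l < p | grp l == g) bhat t l 0 ^+ 2) s 1.
  by apply: dsum => l _; apply: dexp; apply: hd.
have pos : 0 < \sum_(l < p | grp l == g) bhat s l 0 ^+ 2.
  rewrite -sqrtr_gt0 lt_def iS sqrtr_ge0 //.
have dg : derivable (fun t => gnorm grp (bhat t) g) s 1.
  by rewrite /gnorm; apply: dsqrt.
apply: dmul; first exact: dcst.
apply: dsub; apply: dmul.
- exact: dcst.
- exact: dinv.
- by apply: dmul; apply: hd.
- apply: dinv; last exact: dexp.
  by rewrite expf_neq0.
Qed.

Lemma Nij (t : R) (i j : 'I_#|S|) : N t i j = M i j + t * PiFull grp w (bhat t) (enum_val i) (enum_val j).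
Proof. by rewrite !mxE. Qed.

Lemma dN (s : R) (i j : 'I_#|S|) : a < s < b -> derivable (fun t : R => N t i j) s 1.
Proof.
move=> hs; under eq_fun do rewrite Nij.
apply: dadd; first exact: dcst.
apply: dmul; first exact: derivable_id.
exact: dPi_entry.
Qed.

Lemma detN0 s : a < s < b -> \det (N s) != 0.
Proof. by move=> hs; have := NU hs; rewrite unitmxE unitfE. Qed.

Lemma dNinv (s : R) (i j : 'I_#|S|) : a < s < b -> derivable (fun t : R => Ninv t i j) s 1.
Proof.
move=> hs; under eq_fun do rewrite mxE.
apply: dmul.
  apply: dinv; first exact: detN0.
  by apply: (ddet (A := fun t => N t)) => k l; apply: dN.
by apply: (dadj (A := fun t => N t)) => k l; apply: dN.
Qed.

Lemma dF (s : R) : a < s < b -> derivable (fun t : R => \tr (Ninv t *m M)) s 1.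
Proof.
move=> hs; rewrite /mxtrace; apply: dsum => i _.
under eq_fun do rewrite mxE.
apply: dsum => l _; apply: dmul; [exact: dNinv | exact: dcst].
Qed.

Local Notation Nd s := (\matrix_(i, j) 'D_1 (fun t : R => N t i j) s).
Local Notation Nid s := (\matrix_(i, j) 'D_1 (fun t : R => Ninv t i j) s).

Lemma DF (s : R) : a < s < b ->
  'D_1 (fun t : R => \tr (Ninv t *m M)) s = \tr (Nid s *m M).
Proof.
move=> hs; rewrite /mxtrace.
rewrite (@Dsum _ _ _ _ (fun i t => (Ninv t *m M) i i)); last first.
  move=> i _; under eq_fun do rewrite mxE.
  by apply: dsum => l _; apply: dmul; [exact: dNinv | exact: dcst].
apply: eq_bigr => i _.
under eq_fun do rewrite mxE.
rewrite (@Dsum _ _ _ _ (fun l t => Ninv t i l * M l i)); last first.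
  by move=> l _; apply: dmul; [exact: dNinv | exact: dcst].
rewrite [RHS]mxE; apply: eq_bigr => l _.
rewrite (@Dmul _ (fun t => Ninv t i l) (fun _ => M l i)); last 2 first.
- exact: dNinv.
- exact: dcst.
rewrite (Dcst (M l i) s) mulr0 add0r mulrC; congr (_ * _); by rewrite mxE.
Qed.

Lemma key (s : R) : a < s < b -> N s *m Nid s + Nd s *m Ninv s = 0.
Proof.
move=> hs; apply/matrixP => i j.
have hs' : s \in `]a, b[ by rewrite in_itv.
have e1 : 'D_1 (fun t : R => \sum_l N t i l * Ninv t l j) s = 0.
  rewrite (@near_eq_derive _ _ _ _ (fun _ : R => (1%:M : 'M[R]_#|S|) i j)).
    exact: Dcst.
  apply: filterS (near_in_itvoo hs') => t ht.
  have ht' : a < t < b by rewrite in_itv in ht.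
  have := mulmxV (NU ht'); rewrite Ninv_inv // => E.
  by rewrite -[in RHS]E mxE.
rewrite (@Dsum _ _ _ _ (fun l t => N t i l * Ninv t l j)) in e1; last first.
  by move=> l _; apply: dmul; [exact: dN | exact: dNinv].
rewrite [RHS]mxE -[X in _ = X]e1.
rewrite [LHS]mxE [X in X + _]mxE [X in _ + X]mxE -big_split /=.
apply: eq_bigr => l _.
rewrite (@Dmul _ (fun t => N t i l) (fun t => Ninv t l j)); last 2 first.
- exact: dN.
- exact: dNinv.
congr (_ + _); [congr (_ * _) | rewrite mulrC; congr (_ * _)]; by rewrite mxE.
Qed.

Lemma Nd_eq (s : R) : a < s < b ->
  Nd s = restr S (PiFull grp w (bhat s) + s *: dPi grp w bhat s).
Proof.
move=> hs; apply/matrixP => i j.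
set P := fun t => PiFull grp w (bhat t) (enum_val i) (enum_val j).
have r : restr S (PiFull grp w (bhat s) + s *: dPi grp w bhat s) i j = P s + s * derive1 P s.
  rewrite [LHS]mxE [LHS]mxE [X in _ + X]mxE /dPi [X in _ + _ * X]mxE //.
rewrite r [LHS]mxE.
under eq_fun do rewrite Nij -/(P _).
have dP : derivable P s 1 by exact: dPi_entry.
have dI : derivable (fun t : R => t) s 1 by exact: derivable_id.
have dtP : derivable (fun t : R => t * P t) s 1 by apply: dmul.
rewrite (@Dadd _ (fun _ : R => M i j) (fun t : R => t * P t) s _ dtP); last exact: dcst.
rewrite (Dcst (M i j) s) add0r.
rewrite (@Dmul _ (fun t : R => t) P s dI dP).
have -> : 'D_1 (fun t : R => t) s = 1 by exact: Did.
by rewrite mulr1 addrC derive1E.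
Qed.

Lemma Nid_eq (s : R) : a < s < b -> Nid s = - (Ninv s *m Nd s *m Ninv s).
Proof.
move=> hs; have := key hs.
move/eqP; rewrite addr_eq0 => /eqP E.
have NK : Ninv s *m N s = 1%:M by rewrite -Ninv_inv // mulVmx //; exact: NU.
have -> : Nid s = Ninv s *m (N s *m Nid s) by rewrite mulmxA NK mul1mx.
by rewrite E mulmxN mulmxA.
Qed.

Lemma tr_psd m k (Y : 'M[R]_(m, k)) (P : 'M[R]_k) :
  (forall v : 'cV[R]_k, 0 <= (v^T *m P *m v) 0 0) -> 0 <= \tr (Y *m P *m Y^T).
Proof.
move=> H; rewrite /mxtrace; apply: sumr_ge0 => i _.
have := H (row i Y)^T; rewrite trmxK.
suff -> : (row i Y *m P *m (row i Y)^T) 0 0 = (Y *m P *m Y^T) i i by [].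
rewrite !mxE; apply: eq_bigr => l _; rewrite !mxE; congr (_ * _).
by apply: eq_bigr => q _; rewrite !mxE.
Qed.

Lemma DF_le0 (s : R) : a < s < b -> 'D_1 (fun t : R => \tr (Ninv t *m M)) s <= 0.
Proof.
move=> hs; rewrite DF // Nid_eq // Nd_eq //.
set P := restr S (PiFull grp w (bhat s) + s *: dPi grp w bhat s).
have [Psym Ppos] := hpd hs.
have Ppsd : forall v : 'cV[R]_#|S|, 0 <= (v^T *m P *m v) 0 0.
  move=> v; have [->|v0] := eqVneq v 0; last exact: ltW (Ppos v v0).
  by rewrite mulmx0 mxE.
have KT : (Ninv s)^T = Ninv s.
  rewrite -Ninv_inv // trmx_inv; congr invmx.
  rewrite linearD /= linearZ /= restrT PiFullT trmx_mul trmxK //.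
rewrite mulNmx linearN /= oppr_le0.
have -> : \tr (Ninv s *m P *m Ninv s *m M) = \tr ((XA *m Ninv s) *m P *m (XA *m Ninv s)^T).
  by rewrite trmx_mul KT mulmxA (mxtrace_mulC (Ninv s *m P *m Ninv s *m XA^T)) !mulmxA.
exact: tr_psd.
Qed.

Lemma F_mono g1 g2 : a < g1 -> g1 <= g2 -> g2 < b ->
  \tr (Ninv g2 *m M) <= \tr (Ninv g1 *m M).
Proof.
move=> ag1 g12 g2b.
have h1 : g1 \in `]a, b[ by rewrite in_itv /= ag1 (le_lt_trans g12 g2b).
have h2 : g2 \in `]a, b[ by rewrite in_itv /= g2b (lt_le_trans ag1 g12).
apply: (@ler0_derive1_le_oo _ (fun t : R => \tr (Ninv t *m M)) a b) => //.
- by move=> x hx; rewrite in_itv in hx; apply: dF.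
- by move=> x hx; rewrite in_itv in hx; rewrite derive1E; apply: DF_le0.
- move=> x hx; rewrite mem_setE in_itv in hx.
  have d := dF hx.
  have d' := proj1 (derivable1_diffP _ _) d.
  exact: (differentiable_continuous d').
Qed.

Lemma final g1 g2 : a < g1 -> g1 <= g2 -> g2 < b ->
  dfhat X grp w g2 (bhat g2) <= dfhat X grp w g1 (bhat g1).
Proof.
move=> ag1 g12 g2b.
have h1 : a < g1 < b by rewrite ag1 (le_lt_trans g12 g2b).
have h2 : a < g2 < b by rewrite g2b (lt_le_trans ag1 g12) .
rewrite (dfhat_F h1) (dfhat_F h2).
exact: F_mono.
Qed.
End C.

Unset Implicit Arguments.
Theorem theorem4 (R : realType) (n p G : nat) (X : 'M[R]_(n, p)) (y : 'cV[R]_n)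
    (grp : 'I_p -> 'I_G) (w : 'I_G -> R) (bhat : R -> 'cV[R]_p)
    (a b : R) (S : {set 'I_p}) :
  (forall g, 0 < w g) ->
  0 <= a -> a < b ->
  (* bhat gam is the Group Lasso solution for every gam in (a, b) *)
  (forall gam, a < gam < b -> forall beta : 'cV[R]_p,
      glasso_obj X y grp w gam (bhat gam) <= glasso_obj X y grp w gam beta) ->
  (* the active set is constant on (a, b) *)
  (forall gam, a < gam < b -> active grp (bhat gam) = S) ->
  (Xsub S X)^T *m Xsub S X \in unitmx ->
  (* the solution path is differentiable on (a, b) *)
  (forall gam, a < gam < b -> forall j, derivable (fun t => bhat t j 0) gam 1) ->
  (* Pi_A + gam dPi_A/dgam is positive definite on (a, b) *)
  (forall gam, a < gam < b ->
      posdef (restr S (PiFull grp w (bhat gam) + gam *: dPi grp w bhat gam))) ->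
  forall g1 g2, a < g1 -> g1 <= g2 -> g2 < b ->
    dfhat X grp w g2 (bhat g2) <= dfhat X grp w g1 (bhat g1).
Proof.
move=> w0 a0 ab hopt hS Mu hd hpd g1 g2 ag1 g12 g2b.
apply: final; eassumption.
Qed.
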